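(* Let $G$ be a finite simple graph on $[d]$. Then the Hilbert polynomial of $R[G]/K_G$ is the constant $2^d$; that is, $H(R[G]/K_G,k)=2^d$ for all sufficiently large $k$.
   Context: A stable set of $G$ is a subset of $[d]$ with no edge of $G$ (including $\emptyset$ and singletons); $S(G)$ is the set of stable sets; $R[G]=\mathbb{K}[x_S : S\in S(G)]$ over a field $\mathbb{K}$, all variables of degree $1$. $J_G$ is the ideal generated by all $x_{S_1}x_{S_2}-x_{S_3}x_{S_4}$ with $S_i\in S(G)$, $S_1\cap S_2=S_3\cap S_4=\emptyset$, $S_1\cup S_2=S_3\cup S_4$; $M_G=\langle x_Sx_T : S,T\in S(G),\ S\cap T\neq\emptyset\rangle$; $K_G=J_G+M_G$. $H(R[G]/K_G,k)=\dim_{\mathbb{K}}$ of the degree-$k$ part of $R[G]/K_G$; the Hilbert polynomial is the unique polynomial $P\in\mathbb{Q}[k]$ with $H(R[G]/K_G,k)=P(k)$ for all large $k$. *)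

(* Defs.v *)
From HB Require Import structures.
From mathcomp Require Import all_boot all_order all_algebra.
From mathcomp.multinomials Require Import mpoly.
Set Implicit Arguments. Unset Strict Implicit. Unset Printing Implicit Defensive.
Import GRing.Theory.
Local Open Scope ring_scope.

Definition simple_graph (d : nat) (e : rel 'I_d) : Prop :=
  ssrbool.symmetric e /\ ssrbool.irreflexive e.

Definition stableb (d : nat) (e : rel 'I_d) (S : {set 'I_d}) : bool :=
  [forall x in S, forall y in S, ~~ e x y].

Definition stab (d : nat) (e : rel 'I_d) : finType :=
  {S : {set 'I_d} | stableb e S}.

Definition nvars (d : nat) (e : rel 'I_d) : nat := #|{: stab e}|.

(* R[G] = K[x_S : S in S(G)] *)
Definition RG (K : fieldType) (d : nat) (e : rel 'I_d) : Type :=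
  {mpoly K[nvars e]}.

Definition xS (K : fieldType) (d : nat) (e : rel 'I_d) (S : stab e)
  : {mpoly K[nvars e]} := 'X_(enum_rank S).

(* generators of K_G = J_G + M_G *)
Definition KG_gen (K : fieldType) (d : nat) (e : rel 'I_d)
    (p : {mpoly K[nvars e]}) : Prop :=
  (exists S1 S2 S3 S4 : stab e,
      [/\ val S1 :&: val S2 = set0, val S3 :&: val S4 = set0,
          val S1 :|: val S2 = val S3 :|: val S4 &
          p = xS K S1 * xS K S2 - xS K S3 * xS K S4])
  \/
  (exists S T : stab e,
      val S :&: val T != set0 /\ p = xS K S * xS K T).

Definition in_KG (K : fieldType) (d : nat) (e : rel 'I_d)
    (p : {mpoly K[nvars e]}) : Prop :=
  exists s : seq ({mpoly K[nvars e]} * {mpoly K[nvars e]}),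
    (forall c, c \in s -> KG_gen c.2) /\ p = \sum_(c <- s) c.1 * c.2.

(* homogeneous of degree k (all variables of degree 1); 0 is homogeneous *)
Definition homog_deg (n : nat) (K : fieldType) (k : nat) (p : {mpoly K[n]}) : bool :=
  all [pred m | mdeg m == k] (msupp p).

Definition indep_mod_KG (K : fieldType) (d : nat) (e : rel 'I_d) (m : nat)
    (f : 'I_m -> {mpoly K[nvars e]}) : Prop :=
  forall c : 'I_m -> K, in_KG (\sum_(i < m) c i *: f i) -> forall i, c i = 0.

(* H(R[G]/K_G, k) = h : the degree-k part of R[G]/K_G (spanned by the images
   of the degree-k homogeneous polynomials) has K-dimension exactly h. *)
Definition hilb_fun_eq (K : fieldType) (d : nat) (e : rel 'I_d) (k h : nat) : Prop :=
  (exists f : 'I_h -> {mpoly K[nvars e]},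
      (forall i, homog_deg k (f i)) /\ indep_mod_KG f)
  /\
  (forall f : 'I_h.+1 -> {mpoly K[nvars e]},
      (forall i, homog_deg k (f i)) -> ~ indep_mod_KG f).

(* Main.v *)
Require Import Defs.
From mathcomp Require Import all_boot all_order all_algebra.
From mathcomp.multinomials Require Import mpoly.
From mathcomp Require Import zify.
Set Implicit Arguments. Unset Strict Implicit. Unset Printing Implicit Defensive.
Import GRing.Theory.

Lemma card_sets (d : nat) : #|{: {set 'I_d}}| = 2 ^ d.
Proof.
rewrite -cardsT -[in RHS](card_ord d) -cardsT -card_powerset; apply: eq_card => A.
by rewrite !inE subsetT.
Qed.

Section Main.
Variables (K : fieldType) (d : nat) (e : rel 'I_d).
Hypothesis irr : irreflexive e.

Local Notation n := (nvars e).
Local Notation P := {mpoly K[n]}.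

Definition Sv (i : 'I_n) : {set 'I_d} := val (@enum_val (stab e) _ i).

Lemma Sv_inj : injective Sv.
Proof. by move=> i j /val_inj /enum_val_inj. Qed.

Lemma stab0 : stableb e set0.
Proof. by apply/forallP => x; rewrite inE. Qed.

Lemma stab1 x : stableb e [set x].
Proof.
apply/forallP => y; apply/implyP; rewrite inE => /eqP ->.
apply/forallP => z; apply/implyP; rewrite inE => /eqP ->; by rewrite irr.
Qed.

Lemma stab_sub (S T : {set 'I_d}) : T \subset S -> stableb e S -> stableb e T.
Proof.
move=> sTS /forallP H; apply/forallP => x; apply/implyP => xT.
have := H x; rewrite (subsetP sTS) //= => /forallP H2.
apply/forallP => y; apply/implyP => yT; have := H2 y; by rewrite (subsetP sTS).
Qed.

Definition idx (S : {set 'I_d}) (h : stableb e S) : 'I_n :=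
  enum_rank (Sub S h : stab e).

Lemma Sv_idx S h : Sv (@idx S h) = S.
Proof. by rewrite /Sv /idx enum_rankK. Qed.

Lemma xS_idx S : xS K S = 'X_(@idx (val S) (valP S)).
Proof. by rewrite /xS /idx; congr 'X_(enum_rank _); apply: val_inj. Qed.

Lemma Sv_rank (S : stab e) : Sv (enum_rank S) = val S.
Proof. by rewrite /Sv enum_rankK. Qed.

Definition i0 := idx stab0.
Definition isg x := idx (stab1 x).

Definition lin (c : 'I_n -> nat) (m : 'X_{1..n}) : nat := \sum_(i < n) m i * c i.

Lemma linD c m1 m2 : lin c (m1 + m2)%MM = lin c m1 + lin c m2.
Proof. by rewrite /lin -big_split; apply: eq_bigr => i _; rewrite mnmDE mulnDl. Qed.

Lemma linU c j : lin c U_(j)%MM = c j.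
Proof.
rewrite /lin (bigD1 j) //= mnm1E eqxx mul1n big1 ?addn0 // => i ij.
by rewrite mnm1E eq_sym (negbTE ij).
Qed.

Lemma lin0 c : lin c 0%MM = 0.
Proof. by rewrite /lin big1 // => i _; rewrite mnm0E. Qed.

Lemma lin_sum c (I : Type) (r : seq I) (Q : pred I) F :
  lin c (\sum_(x <- r | Q x) F x)%MM = \sum_(x <- r | Q x) lin c (F x).
Proof.
elim: r => [|a r IH]; first by rewrite !big_nil lin0.
by rewrite !big_cons; case: (Q a) => //; rewrite linD IH.
Qed.

Definition cnt (m : 'X_{1..n}) (x : 'I_d) := lin (fun i => x \in Sv i) m.

Lemma mdeg_lin m : mdeg m = lin (fun _ => 1) m.
Proof. by rewrite mdegE /lin; apply: eq_bigr => i _; rewrite muln1. Qed.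

Open Scope ring_scope.

Lemma KG0 : in_KG (0 : P).
Proof. by exists [::]; split => //; rewrite big_nil. Qed.

Lemma KGD (p q : P) : in_KG p -> in_KG q -> in_KG (p + q).
Proof.
move=> [s [Hs ->]] [t [Ht ->]]; exists (s ++ t); split; last by rewrite big_cat.
by move=> c; rewrite mem_cat => /orP [/Hs|/Ht].
Qed.

Lemma KGM (r p : P) : in_KG p -> in_KG (r * p).
Proof.
move=> [s [Hs ->]]; exists [seq (r * c.1, c.2) | c <- s]; split.
  by move=> c /mapP [c' /Hs H ->].
by rewrite big_map mulr_sumr; apply: eq_bigr => c _; rewrite mulrA.
Qed.

Lemma KGgen (r g : P) : KG_gen g -> in_KG (r * g).
Proof.
move=> H; exists [:: (r, g)]; split; last by rewrite big_seq1.
by move=> c; rewrite mem_seq1 => /eqP ->.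
Qed.

Lemma KGZ (c : K) (p : P) : in_KG p -> in_KG (c *: p).
Proof. by move=> H; rewrite -mul_mpolyC; apply: KGM. Qed.

Lemma KGN (p : P) : in_KG p -> in_KG (- p).
Proof. by move=> H; rewrite -scaleN1r; apply: KGZ. Qed.

Lemma KGB (p q : P) : in_KG p -> in_KG q -> in_KG (p - q).
Proof. by move=> Hp Hq; apply: KGD => //; apply: KGN. Qed.

Lemma KG_sum (I : Type) (r : seq I) (F : I -> P) :
  (forall i, in_KG (F i)) -> in_KG (\sum_(i <- r) F i).
Proof.
move=> H; elim: r => [|a r IH]; first by rewrite big_nil; apply: KG0.
by rewrite big_cons; apply: KGD.
Qed.

Definition w (k : nat) (U : {set 'I_d}) (m : 'X_{1..n}) : bool :=
  (mdeg m == k) && [forall x, cnt m x == (x \in U)].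

Definition phi k U (p : P) : K :=
  \sum_(m : 'X_{1..n < k.+1}) p@_m * (w k U m)%:R.

Lemma phiD k U (p q : P) : phi k U (p + q) = phi k U p + phi k U q.
Proof. by rewrite /phi -big_split; apply: eq_bigr => m _; rewrite mcoeffD mulrDl. Qed.

Lemma phiZ k U c (p : P) : phi k U (c *: p) = c * phi k U p.
Proof. by rewrite /phi mulr_sumr; apply: eq_bigr => m _; rewrite mcoeffZ mulrA. Qed.

Lemma phi0 k U : phi k U 0 = 0.
Proof. by rewrite /phi big1 // => m _; rewrite mcoeff0 mul0r. Qed.

Lemma phiN k U (p : P) : phi k U (- p) = - phi k U p.
Proof. by rewrite -scaleN1r phiZ mulN1r. Qed.

Lemma phiB k U (p q : P) : phi k U (p - q) = phi k U p - phi k U q.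
Proof. by rewrite phiD phiN. Qed.

Lemma phi_sum k U (I : Type) (r : seq I) (F : I -> P) :
  phi k U (\sum_(i <- r) F i) = \sum_(i <- r) phi k U (F i).
Proof.
elim: r => [|a r IH]; first by rewrite !big_nil phi0.
by rewrite !big_cons phiD IH.
Qed.

Lemma phiX k U a : phi k U 'X_[a] = (w k U a)%:R.
Proof.
rewrite /phi; case: (ltnP (mdeg a) k.+1) => ha.
  rewrite (bigD1 (BMultinom ha)) //= mcoeffX eqxx mul1r big1 ?addr0 //.
  move=> m /eqP hm; rewrite mcoeffX; case: eqP => [E|]; last by rewrite mul0r.
  by exfalso; apply: hm; apply: val_inj; rewrite /= E.
rewrite big1; last first.
  move=> m _; rewrite mcoeffX; case: eqP => [E|]; last by rewrite mul0r.
  have h : (mdeg (bmnm m) < k.+1)%N := valP m.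
  by move: h; rewrite -E => /leq_trans/(_ ha); rewrite ltnn.
by rewrite /w; case: eqP => // E; move: ha; rewrite E ltnn.
Qed.

Lemma phi_mulX k U (q : P) a :
  phi k U (q * 'X_[a]) = \sum_(m <- msupp q) q@_m * (w k U (m + a))%:R.
Proof.
rewrite {1}(mpolyE q) mulr_suml phi_sum; apply: eq_bigr => m _.
by rewrite -scalerAl -mpolyXD phiZ phiX.
Qed.

Lemma cntD m1 m2 x : cnt (m1 + m2)%MM x = (cnt m1 x + cnt m2 x)%N.
Proof. exact: linD. Qed.

Lemma cntU j x : cnt U_(j)%MM x = (x \in Sv j).
Proof. exact: linU. Qed.

Lemma XX (i j : 'I_n) : ('X_i * 'X_j : P) = 'X_[U_(i) + U_(j)].
Proof. by rewrite mpolyXD. Qed.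

Lemma phi_gen k U (q g : P) : KG_gen g -> phi k U (q * g) = 0.
Proof.
case.
  move=> [S1 [S2 [S3 [S4 [h12 h34 hU ->]]]]].
  rewrite !xS_idx !XX mulrBr phiB !phi_mulX -sumrB big1 // => m _.
  rewrite -mulrBr; apply/eqP; rewrite mulf_eq0; apply/orP; right.
  rewrite subr_eq0; apply/eqP; congr (_ %:R).
  rewrite /w !mdegD !mdeg1; congr (_ && _); apply: eq_forallb => x.
  rewrite !cntD !cntU !Sv_idx; congr (_ + _ == _)%N.
  have E (A B : {set 'I_d}) : A :&: B = set0 -> ((x \in A) + (x \in B))%N = (x \in A :|: B).
    move=> /setP /(_ x); rewrite !inE; by case: (x \in A); case: (x \in B).
  by rewrite E // E // hU.
move=> [S [T [hST ->]]]; rewrite xS_idx xS_idx XX phi_mulX big1 // => m _.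
case/set0Pn: hST => x; rewrite inE => /andP [xS xT].
rewrite /w; case: (mdeg _ == k) => //=; last by rewrite mulr0.
case: forallP => [H|]; last by rewrite mulr0.
move: (H x); rewrite !cntD !cntU !Sv_idx xS xT.
by case: (x \in U); rewrite !addnS.
Qed.

Lemma phi_KG k U (p : P) : in_KG p -> phi k U p = 0.
Proof.
move=> [s [Hs ->]]; rewrite phi_sum big_seq big1 // => c /Hs; exact: phi_gen.
Qed.

Close Scope ring_scope.

Lemma comp (m : 'X_{1..n}) i : m i = lin (fun l => (l == i) : nat) m.
Proof.
rewrite /lin (bigD1 i) //= eqxx muln1 big1 ?addn0 // => l /negbTE ->.
by rewrite muln0.
Qed.

Lemma lin_Mn c (m : 'X_{1..n}) j : lin c (m *+ j)%MM = lin c m * j.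
Proof.
elim: j => [|j IH]; first by rewrite mulm0n lin0 muln0.
by rewrite mulmS linD IH mulnS.
Qed.

Definition mU k (U : {set 'I_d}) : 'X_{1..n} := (U_(i0) *+ (k - #|U|) + \sum_(x in U) U_(isg x))%MM.

Lemma Sv_i0 : Sv i0 = set0. Proof. exact: Sv_idx. Qed.
Lemma Sv_isg x : Sv (isg x) = [set x]. Proof. exact: Sv_idx. Qed.

Lemma cnt_mU k U x : cnt (mU k U) x = (x \in U).
Proof.
rewrite /cnt linD lin_Mn lin_sum linU Sv_i0 inE mul0n add0n.
case xU: (x \in U).
  rewrite (bigD1 x) //= linU Sv_isg inE eqxx big1 // => y /andP [_ yx].
  by rewrite linU Sv_isg inE eq_sym (negbTE yx).
by rewrite big1 // => y yU; rewrite linU Sv_isg inE; case: eqP => // E; rewrite E yU in xU.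
Qed.

Lemma mdeg_mU k U : d <= k -> mdeg (mU k U) = k.
Proof.
move=> dk; rewrite mdeg_lin linD lin_Mn lin_sum linU mul1n.
rewrite (eq_bigr (fun _ => 1)) => [|y _]; last by rewrite linU.
rewrite sum1_card subnK //; apply: leq_trans dk.
by rewrite -[X in _ <= X](card_ord d) max_card.
Qed.

Lemma mU_base k U i : 1 < #|Sv i| -> mU k U i = 0.
Proof.
move=> hi; rewrite comp linD lin_Mn lin_sum linU.
have -> : (i0 == i) = false.
  by apply/negbTE; apply: contraTneq hi => <-; rewrite Sv_i0 cards0.
rewrite mul0n add0n big1 // => y _; rewrite linU.
by apply/eqP; rewrite eqb0; apply: contraTneq hi => <-; rewrite Sv_isg cards1.
Qed.

Definition base (m : 'X_{1..n}) := forall l, 1 < #|Sv l| -> m l = 0.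

Lemma single (m : 'X_{1..n}) j x : base m -> Sv j = [set x] -> cnt m x = m j.
Proof.
move=> bm hj; rewrite /cnt /lin (bigD1 j) //= hj set11 muln1 big1 ?addn0 // => l lj.
case xl: (x \in Sv l); last by rewrite muln0.
case: (ltnP 1 #|Sv l|) => [/bm -> //| hl].
have : [set x] == Sv l by rewrite eqEcard sub1set xl cards1.
by rewrite -hj => /eqP /Sv_inj E; move: lj; rewrite E eqxx.
Qed.

Lemma base_eq (m m' : 'X_{1..n}) : base m -> base m' -> (forall x, cnt m x = cnt m' x) ->
  mdeg m = mdeg m' -> m = m'.
Proof.
move=> bm bm' hc hd.
have H1 j : j != i0 -> m j = m' j.
  move=> j0; have nz : Sv j != set0.
    by apply: contra j0 => /eqP; rewrite -Sv_i0 => /Sv_inj ->.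
  case: (ltnP 1 #|Sv j|) => [h|h]; first by rewrite bm // bm'.
  have : #|Sv j| == 1 by rewrite eqn_leq h card_gt0.
  move/cards1P => [x hx]; by rewrite -(single bm hx) -(single bm' hx).
apply/mnmP => j; case: (eqVneq j i0) => [->|]; last exact: H1.
move: hd; rewrite !mdegE (bigD1 i0) //= [in RHS](bigD1 i0) //=.
rewrite (eq_bigr (fun l => m' l)) => [|l /H1 //]; exact: addIn.
Qed.

Lemma cnt_pos (m : 'X_{1..n}) x : 0 < cnt m x -> exists i, 0 < m i /\ x \in Sv i.
Proof.
case: (pickP (fun i => (0 < m i) && (x \in Sv i))) => [i /andP [h1 h2]|H]; first by exists i.
rewrite /cnt /lin big1 // => i _; have := H i.
case: (x \in Sv i); last by rewrite andbF muln0.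
by rewrite andbT muln1 lt0n => /negbFE /eqP.
Qed.

Lemma sum_cnt (m : 'X_{1..n}) : \sum_(x < d) cnt m x = lin (fun i => #|Sv i|) m.
Proof.
rewrite /cnt /lin exchange_big; apply: eq_bigr => i _ /=.
rewrite -big_distrr /=; congr (_ * _).
rewrite -sum1_card [in RHS]big_mkcond /=; apply: eq_bigr => x _; by case: (x \in Sv i).
Qed.

Open Scope ring_scope.

Lemma X_val (i : 'I_n) : ('X_i : P) = xS K (enum_val i).
Proof. by rewrite /xS enum_valK. Qed.

Lemma bad_KG (m : 'X_{1..n}) x : (1 < cnt m x)%N -> in_KG ('X_[m] : P).
Proof.
move=> h; have [i [hi xi]] := cnt_pos (ltnW h).
have le1 : (U_(i) <= m)%MM.
  by apply/mnm_lepP => l; rewrite mnm1E; case: eqP => // <-.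
set r := (m - U_(i))%MM; have Em : m = (r + U_(i))%MM by rewrite submK.
have : (0 < cnt r x)%N by move: h; rewrite Em cntD cntU xi addn1 ltnS.
case/cnt_pos => j [hj xj].
have le2 : (U_(j) <= r)%MM.
  by apply/mnm_lepP => l; rewrite mnm1E; case: eqP => // <-.
have Er : r = (r - U_(j) + U_(j))%MM by rewrite submK.
rewrite Em Er -addmA mpolyXD -(XX j i); apply: KGgen; right.
exists (enum_val j), (enum_val i); split; last by rewrite !X_val.
by apply/set0Pn; exists x; rewrite inE; apply/andP; split.
Qed.

Definition mu := lin (fun i => #|Sv i| ^ 2)%N.

Lemma good_red k (dk : (d <= k)%N) : forall N (m : 'X_{1..n}), (mu m < N)%N -> mdeg m = k ->
  (forall x, cnt m x <= 1)%N ->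
  in_KG ('X_[m] - 'X_[mU k [set x | cnt m x == 1%N]] : P).
Proof.
elim=> [//|N IH] m hN hdeg hgood.
case: (pickP (fun i => (0 < m i) && (1 < #|Sv i|))%N) => [i /andP [hi hc]|Hb]; last first.
  suff E : m = mU k [set x | cnt m x == 1%N] by rewrite {1}E subrr; apply: KG0.
  apply: base_eq.
  - by move=> l hl; have := Hb l; rewrite hl andbT lt0n => /negbFE/eqP.
  - exact: mU_base.
  - by move=> x; rewrite cnt_mU inE; have := hgood x; case: (cnt m x) => [|[|]].
  - by rewrite mdeg_mU.
have Sv_ne0 l : l != i0 -> (0 < #|Sv l|)%N.
  move=> nl; rewrite card_gt0; apply: contra nl => /eqP; rewrite -Sv_i0.
  by move/Sv_inj ->.
have ii0 : i != i0 by apply: contraTneq hc => ->; rewrite Sv_i0 cards0.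
have hi0 : (0 < m i0)%N.
  rewrite lt0n; apply/negP => /eqP h0.
  have A : (lin (fun _ => 1) m < lin (fun i => #|Sv i|) m)%N.
    rewrite /lin (bigD1 i) //= [X in (_ < X)%N](bigD1 i) //=.
    rewrite -addSn leq_add //; first by rewrite muln1; exact: ltn_Pmulr.
    apply: leq_sum => l _; case: (eqVneq l i0) => [->|nl]; first by rewrite h0.
    by rewrite muln1 -{1}[m l]muln1 leq_mul2l Sv_ne0 // orbT.
  have B : (lin (fun i => #|Sv i|) m <= d)%N.
    rewrite -sum_cnt; apply: (@leq_trans (\sum_(x < d) 1)%N).
      by apply: leq_sum => x _; exact: hgood.
    by rewrite sum_nat_const card_ord muln1.
  rewrite -mdeg_lin hdeg in A; lia.
have : Sv i != set0 by rewrite -card_gt0 ltnW.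
case/set0Pn => s si.
set T := Sv i :\ s.
have hT : stableb e T := stab_sub (subsetDl _ _) (valP (enum_val i)).
set j1 := isg s; set j2 := idx hT.
set a := (U_(i) + U_(i0))%MM; set b := (U_(j1) + U_(j2))%MM.
have la : (a <= m)%MM.
  apply/mnm_lepP => l; rewrite mnmDE !mnm1E.
  case: (eqVneq i l) => [E1|nil]; case: (eqVneq i0 l) => [E2|n0l] /=.
  - by move: ii0; rewrite E1 E2 eqxx.
  - by rewrite -E1.
  - by rewrite -E2.
  - by [].
set r := (m - a)%MM; have Em : m = (r + a)%MM by rewrite submK.
set m' := (r + b)%MM.
have cab x : cnt a x = cnt b x.
  rewrite !cntD !cntU Sv_i0 /j1 /j2 Sv_isg Sv_idx /T !inE.
  by case: (eqVneq x s) => [->|]; rewrite ?si /=; case: (x \in Sv i).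
have cm x : cnt m' x = cnt m x.
  by rewrite /m' [in RHS]Em !cntD; have := cab x; rewrite !cntD => ->.
have -> : [set x | cnt m x == 1%N] = [set x | cnt m' x == 1%N].
  by apply/setP => x; rewrite !inE cm.
rewrite (_ : 'X_[m] - _ = ('X_[m] - 'X_[m']) + ('X_[m'] - 'X_[mU k [set x | cnt m' x == 1%N]])); last first.
  by rewrite addrA subrK.
apply: KGD.
  rewrite Em /m' !mpolyXD -mulrBr; apply: KGgen; left.
  exists (enum_val i), (Sub set0 stab0), (Sub [set s] (stab1 s)), (Sub T hT); split.
  - by rewrite /= setI0.
  - by apply/setP => y; rewrite !inE; case: eqP => //= ->; rewrite eqxx.
  - by rewrite /= setU0 setD1K.
  - by rewrite X_val.
apply: IH.
- suff h : (mu m' < mu m)%N by apply: leq_trans h _; rewrite -ltnS.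
  rewrite [in X in (_ < X)%N]Em /m' /mu !linD !linU Sv_i0 /j1 /j2 Sv_isg Sv_idx cards1 cards0.
  have := cardsD1 s (Sv i); rewrite si -/T => E.
  rewrite E; nia.
- by rewrite -hdeg Em /m' !mdegD !mdeg1.
- by move=> x; rewrite cm.
Qed.


Lemma KG_sum_in (I : eqType) (r : seq I) (F : I -> P) :
  (forall i, i \in r -> in_KG (F i)) -> in_KG (\sum_(i <- r) F i).
Proof.
elim: r => [|a r IH] H; first by rewrite big_nil; apply: KG0.
rewrite big_cons; apply: KGD; first by apply: H; rewrite mem_head.
by apply: IH => i ir; apply: H; rewrite in_cons ir orbT.
Qed.

Lemma w_mU k (dk : (d <= k)%N) U V : w k V (mU k U) = (U == V).
Proof.
rewrite /w mdeg_mU // eqxx /=.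
apply/forallP/eqP => [H|->]; last by move=> x; rewrite cnt_mU eqxx.
by apply/setP => x; have := H x; rewrite cnt_mU; case: (x \in U); case: (x \in V).
Qed.

Lemma span k (dk : (d <= k)%N) (m : 'X_{1..n}) : mdeg m = k ->
  in_KG ('X_[m] - \sum_(U : {set 'I_d}) (w k U m)%:R *: 'X_[mU k U] : P).
Proof.
move=> hm; case: (boolP [forall x, cnt m x <= 1]%N) => [/forallP hg|].
  set U0 := [set x | cnt m x == 1%N].
  rewrite (bigD1 U0) //= big1 ?addr0; last first.
    move=> V hV; rewrite /w hm eqxx /=.
    case: forallP => [H|]; last by rewrite scale0r.
    exfalso; move/eqP: hV; apply; apply/setP => x; rewrite inE.
    by have := H x; have := hg x; case: (x \in V); case: (cnt m x) => [|[|]] // _ /eqP.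
  have -> : w k U0 m = true.
    rewrite /w hm eqxx /=; apply/forallP => x; rewrite inE.
    by have := hg x; case: (cnt m x) => [|[|]].
  rewrite scale1r; exact: (@good_red k dk (mu m).+1).
rewrite negb_forall => /existsP [x]; rewrite -ltnNge => hx.
rewrite big1 ?subr0; first exact: bad_KG hx.
move=> V _; rewrite /w; case: (mdeg m == k) => //=; last by rewrite scale0r.
case: forallP => [H|]; last by rewrite scale0r.
by have := H x; move: hx; case: (x \in V); case: (cnt m x) => [|[|]].
Qed.

Lemma phiE k U (p : P) : phi k U p = \sum_(m <- msupp p) p@_m * (w k U m)%:R.
Proof.
by rewrite {1}(mpolyE p) phi_sum; apply: eq_bigr => m _; rewrite phiZ phiX.
Qed.

Lemma span_hom k (dk : (d <= k)%N) (p : P) : homog_deg k p ->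
  in_KG (p - \sum_(U : {set 'I_d}) phi k U p *: 'X_[mU k U]).
Proof.
move=> /allP hp.
have -> : p - \sum_(U : {set 'I_d}) phi k U p *: 'X_[mU k U] =
   \sum_(m <- msupp p) p@_m *: ('X_[m] - \sum_(U : {set 'I_d}) (w k U m)%:R *: 'X_[mU k U]).
  under [in RHS]eq_bigr do rewrite scalerBr.
  rewrite sumrB; congr (_ - _); first exact: mpolyE.
  under eq_bigr do rewrite phiE scaler_suml.
  rewrite exchange_big /=; apply: eq_bigr => m _.
  by rewrite scaler_sumr; apply: eq_bigr => U _; rewrite scalerA.
apply: KG_sum_in => m hm; apply: KGZ; apply: span => //.
by apply/eqP; exact: (hp m hm).
Qed.


Definition setof (j : 'I_(2 ^ d)) : {set 'I_d} :=
  enum_val (cast_ord (esym (card_sets d)) j).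
Definition rankof (U : {set 'I_d}) : 'I_(2 ^ d) :=
  cast_ord (card_sets d) (enum_rank U).

Lemma setofK : cancel setof rankof.
Proof. by move=> j; rewrite /setof /rankof enum_valK cast_ordKV. Qed.
Lemma rankofK : cancel rankof setof.
Proof. by move=> U; rewrite /setof /rankof cast_ordK enum_rankK. Qed.
Lemma setof_inj : injective setof. Proof. exact: can_inj setofK. Qed.

Lemma main_res k (dk : (d <= k)%N) : hilb_fun_eq K e k (2 ^ d).
Proof.
split.
  exists (fun j => 'X_[mU k (setof j)]); split.
    by move=> j; rewrite /homog_deg msuppX /= mdeg_mU // eqxx.
  move=> c H i; have := phi_KG k (setof i) H; rewrite phi_sum.
  under eq_bigr do rewrite phiZ phiX w_mU //.
  rewrite (bigD1 i) //= eqxx mulr1 big1 ?addr0 // => j ji.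
  by rewrite (inj_eq setof_inj) (negbTE ji) mulr0.
move=> f hf Hind.
pose A : 'M[K]_((2 ^ d).+1, 2 ^ d) := \matrix_(i, j) phi k (setof j) (f i).
have nz : kermx A != 0.
  by rewrite -mxrank_eq0 mxrank_ker subn_eq0 -ltnNge ltnS rank_leq_col.
have [r hr] : exists r, row r (kermx A) != 0.
  case: (pickP (fun r => row r (kermx A) != 0)) => [r hr|H]; first by exists r.
  exfalso; move/eqP: nz; apply; apply/row_matrixP => i; rewrite row0.
  exact/eqP/negbFE/H.
pose c : 'I_(2 ^ d).+1 -> K := fun i => kermx A r i.
have hc j : \sum_i c i * phi k (setof j) (f i) = 0.
  have E : row r (kermx A) *m A = 0 by rewrite -row_mul mulmx_ker row0.
  have := congr1 (fun M : 'M[K]_(1, 2 ^ d) => M 0 j) E; rewrite !mxE => E2.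
  rewrite -[RHS]E2; apply: eq_bigr => i _; by rewrite /A /c !mxE.
have HK : in_KG (\sum_i c i *: f i).
  set g := fun i => \sum_(U : {set 'I_d}) phi k U (f i) *: 'X_[mU k U].
  have -> : \sum_i c i *: f i = \sum_i c i *: (f i - g i) + \sum_i c i *: g i.
    by rewrite -big_split /=; apply: eq_bigr => i _; rewrite -scalerDr subrK.
  have -> : \sum_i c i *: g i = 0.
    have Rg i : g i = \sum_j phi k (setof j) (f i) *: 'X_[mU k (setof j)].
      rewrite /g (reindex setof) //.
      by apply: onW_bij; exists rankof; [exact: setofK | exact: rankofK].
    under eq_bigr do rewrite Rg scaler_sumr.
    rewrite exchange_big big1 // => j _.
    under eq_bigr do rewrite scalerA.
    by rewrite -scaler_suml hc scale0r.
  rewrite addr0; apply: KG_sum => i; apply: KGZ; exact: span_hom.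
have H0 := Hind c HK.
move/negP: hr; apply; apply/eqP/rowP => i; by rewrite [RHS]mxE -(H0 i) /c mxE.
Qed.

End Main.

Theorem proposition6p11 (K : fieldType) (d : nat) (e : rel 'I_d) :
  simple_graph e ->
  exists k0 : nat, forall k : nat, (k0 <= k)%N -> hilb_fun_eq K e k (2 ^ d).
Proof.
move=> [_ irr]; exists d => k dk; exact: main_res.
Qed.
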